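(* Let $G=\langle V,E\rangle$ be a DAG and let $E_1\subseteq E$ be such that $G$ has no $E_1$-shortcuts. Then for every topological sorting $\tau$ of $G$, $$|V|-|\pi^{E_1}_\tau| = |E_1|-\sum_{P_1,P_2\in\pi^{E_1}_\tau,\ P_1\neq P_2}|P_1\to_{E_1}P_2|.$$
   Context: A DAG is a finite directed acyclic graph. A topological sorting of $G$ is a bijection $\tau:V\to\{1,\dots,|V|\}$ with $\tau(u)<\tau(v)$ for every arc $\langle u,v\rangle\in E$. A path $\langle u_1,\dots,u_n\rangle$ ($n\ge1$) is an $E_1$-path if $\langle u_i,u_{i+1}\rangle\in E_1$ for all $i<n$; its length is $n-1$. An arc $\langle v,u\rangle\in E_1$ is an $E_1$-shortcut if there is an $E_1$-path from $v$ to $u$ of length at least $2$. An $E_1$-path $\langle u_1,\dots,u_n\rangle$ is a $\tau,E_1$-path if $\tau(u_{i+1})=\tau(u_i)+1$ for all $i<n$; it is maximal if its vertex set is not contained in the vertex set of any other $\tau,E_1$-path. $\pi^{E_1}_\tau$ denotes the set of vertex sets of maximal $\tau,E_1$-paths. For $V_1,V_2\subseteq V$, $V_1\to_{E_1}V_2=\{\langle v_1,v_2\rangle\in E_1:v_1\in V_1,v_2\in V_2\}$. *)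

(* Defs.v *)
From mathcomp Require Import all_boot.
From mathcomp Require Import boolp.
Set Implicit Arguments. Unset Strict Implicit. Unset Printing Implicit Defensive.

Section Dag.
Variable V : finType.

(* A path <u_1,...,u_n> (n >= 1) is represented as head x and tail p:
   x :: p. It is an e-path iff [path e x p]; its length is [size p]. *)

Definition acyclic (E : rel V) : Prop :=
  forall (v : V) (p : seq V), path E v p -> last v p = v -> p = [::].

Definition topological_sorting (E : rel V) (tau : V -> nat) : Prop :=
  [/\ injective tau,
      (forall v, 1 <= tau v <= #|V|),
      (forall k, 1 <= k <= #|V| -> exists v, tau v = k) &
      (forall u v, E u v -> tau u < tau v)].

Definition E1_shortcut (E1 : rel V) (v u : V) : Prop :=
  E1 v u /\ exists p : seq V, [/\ path E1 v p, last v p = u & 2 <= size p].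

Definition no_shortcuts (E1 : rel V) : Prop :=
  forall v u, ~ E1_shortcut E1 v u.

Definition tau_rel (tau : V -> nat) (E1 : rel V) : rel V :=
  fun x y => E1 x y && (tau y == (tau x).+1).

Definition tau_path (tau : V -> nat) (E1 : rel V) (x : V) (p : seq V) :=
  path (tau_rel tau E1) x p.

Definition maximal_tau_path (tau : V -> nat) (E1 : rel V) (x : V) (p : seq V)
  : Prop :=
  tau_path tau E1 x p /\
  forall (y : V) (q : seq V), tau_path tau E1 y q ->
    {subset x :: p <= y :: q} -> y :: q = x :: p.

Definition pi_tau (tau : V -> nat) (E1 : rel V) : {set {set V}} :=
  [set S : {set V} | `[< exists (x : V) (p : seq V),
        maximal_tau_path tau E1 x p /\ S = [set y in x :: p] >]].

Definition arcs_between (E1 : rel V) (V1 V2 : {set V}) : {set V * V} :=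
  [set a : V * V | [&& E1 a.1 a.2, a.1 \in V1 & a.2 \in V2]].

Definition arcs (E1 : rel V) : {set V * V} := [set a : V * V | E1 a.1 a.2].

End Dag.

(* Main.v *)
Require Import Defs.
From mathcomp Require Import all_boot all_order all_algebra.
Import GRing.Theory.
From mathcomp Require Import boolp zify.
Set Implicit Arguments. Unset Strict Implicit. Unset Printing Implicit Defensive.

Section S.
Variables (V : finType) (E E1 : rel V) (tau : V -> nat).
Hypothesis hsub : forall u v, E1 u v -> E u v.
Hypothesis hnosc : no_shortcuts E1.
Hypothesis htau : topological_sorting E tau.

Local Notation R := (tau_rel tau E1).

Lemma tinj : injective tau. Proof. by case: htau. Qed.
Lemma tpos v : 0 < tau v. Proof. by case: htau => _ h _ _; case/andP: (h v). Qed.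
Lemma tleN v : tau v <= #|V|. Proof. by case: htau => _ h _ _; case/andP: (h v). Qed.
Lemma tlt u v : E1 u v -> tau u < tau v. Proof. by case: htau => _ _ _ h /hsub /h. Qed.
Lemma R_tau u v : R u v -> tau v = (tau u).+1. Proof. by case/andP => _ /eqP. Qed.
Lemma R_E1 u v : R u v -> E1 u v. Proof. by case/andP. Qed.
Lemma R_funl x y z : R y x -> R z x -> y = z.
Proof. move=> /R_tau h1 /R_tau h2; apply: tinj; rewrite h1 in h2; by case: h2. Qed.
Lemma R_funr x y z : R x y -> R x z -> y = z.
Proof. move=> /R_tau h1 /R_tau h2; apply: tinj; by rewrite h1 h2. Qed.

Definition pr v := [pick u | R u v].
Fixpoint hdn n v := if n is n'.+1 then (if pr v is Some u then hdn n' u else v) else v.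
Definition hd v := hdn #|V| v.

Lemma prS v u : pr v = Some u -> R u v.
Proof. rewrite /pr; case: pickP => // w H [<-]; exact: H. Qed.
Lemma prN v u : pr v = None -> ~~ R u v.
Proof. rewrite /pr; case: pickP => // H _; by rewrite H. Qed.

Lemma hdn_None n v : pr v = None -> hdn n v = v.
Proof. by case: n => //= n ->. Qed.

Lemma hdn_stable n m v : tau v <= n -> n <= m -> hdn m v = hdn n v.
Proof.
elim: n m v => [|n IH] [|m] v //=; first by rewrite leqNgt tpos.
move=> Hv Hnm; case E0: (pr v) => [u|] //.
have := R_tau (prS E0) => Hu; apply: IH => //; lia.
Qed.

Lemma hdn_head n v : tau v <= n -> pr (hdn n v) = None.
Proof.
elim: n v => [|n IH] v /=; first by rewrite leqNgt tpos.
move=> Hv; case E0: (pr v) => [u|] //.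
have := R_tau (prS E0) => Hu; apply: IH; lia.
Qed.

Lemma hd_head v : pr (hd v) = None. Proof. exact: hdn_head (tleN v). Qed.
Lemma hd_id v : hd (hd v) = hd v. Proof. exact: hdn_None (hd_head v). Qed.

Lemma hd_R u v : R u v -> hd v = hd u.
Proof.
move=> Huv; have Hv := tleN v; have Ht := R_tau Huv.
rewrite /hd; case EN: #|V| => [|n]; first by move: Hv; rewrite EN Ht.
case E0: (pr v) => [w|]; last by move: (prN u E0); rewrite Huv.
have Hw : hdn n.+1 v = hdn n w by rewrite /= E0.
rewrite Hw; have <- := R_funl (prS E0) Huv.
symmetry; apply: hdn_stable => //. rewrite EN Ht in Hv. rewrite (R_tau (prS E0)) in Ht. lia.
Qed.

Lemma hdn_tau n v : tau (hdn n v) <= tau v.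
Proof.
elim: n v => [|n IH] v //=; case E0: (pr v) => [u|] //.
have := R_tau (prS E0) => Hu; apply: leq_trans (IH u) _; lia.
Qed.
Lemma hd_tau v : tau (hd v) <= tau v. Proof. exact: hdn_tau. Qed.

Lemma path_hd x p : path R x p -> forall y, y \in x :: p -> hd y = hd x.
Proof.
elim: p x => [|a p IH] x /=; first by move=> _ y; rewrite inE => /eqP ->.
case/andP=> Hxa Hp y; rewrite inE => /orP[/eqP -> //|Hy].
by rewrite (IH a Hp y Hy) (hd_R Hxa).
Qed.

Lemma path_last_tau x p : path R x p -> tau (last x p) = tau x + size p.
Proof.
elim: p x => [|a p IH] x /=; first by rewrite addn0.
case/andP=> Hxa Hp; rewrite (IH a Hp) (R_tau Hxa); lia.
Qed.

Lemma path_mem_tau x p y : path R x p -> y \in x :: p ->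
  tau x <= tau y <= tau x + size p.
Proof.
elim: p x => [|a p IH] x /=; first by move=> _; rewrite inE => /eqP ->; lia.
case/andP=> Hxa Hp; rewrite inE => /orP[/eqP -> |Hy]; first lia.
have := IH a Hp Hy; rewrite (R_tau Hxa); lia.
Qed.

Lemma path_uniq x p q : path R x p -> path R x q -> size p <= size q ->
  p = take (size p) q.
Proof.
elim: p x q => [|a p IH] x [|b q] //= /andP[Hxa Hp] /andP[Hxb Hq] Hs.
have Eab := R_funr Hxa Hxb; subst b; by rewrite -(IH a q).
Qed.

Lemma hd_path u v : hd u = hd v -> tau u <= tau v ->
  exists p, [/\ path R u p, last u p = v & size p = tau v - tau u].
Proof.
move=> Hh Hle; move: {2}(tau v - tau u) (leqnn (tau v - tau u)) => n.
elim: n v Hh Hle => [|n IH] v Hh Hle Hn.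
  have Euv : u = v by apply: tinj; lia.
  by subst v; exists [::]; rewrite subnn.
case: (eqVneq u v) => [<-|Huv]; first by exists [::]; rewrite subnn.
have Hlt : tau u < tau v by rewrite ltn_neqAle Hle andbT; apply/eqP => /tinj; apply/eqP.
case E0: (pr v) => [w|].
  have Hwv := prS E0; have Hw := R_tau Hwv.
  have [p [Hp Hl Hs]] : exists p, [/\ path R u p, last u p = w & size p = tau w - tau u].
    apply: IH; [by rewrite (hd_R Hwv) in Hh | lia | lia].
  exists (rcons p v); rewrite rcons_path last_rcons size_rcons Hp Hl Hwv; split => //; lia.
have : tau (hd u) <= tau u := hd_tau u.
by rewrite Hh /hd (hdn_None _ E0) leqNgt Hlt.
Qed.

Lemma path_memP x p y : path R x p ->
  (y \in x :: p) = [&& hd y == hd x, tau x <= tau y & tau y <= tau x + size p].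
Proof.
move=> Hp; apply/idP/idP.
  move=> Hy; rewrite (path_hd Hp Hy) eqxx /=; exact: path_mem_tau Hp Hy.
case/and3P=> /eqP Hh H1 H2.
have [r [Hr Hl Hs]] := hd_path (esym Hh) H1.
have Hsz : size r <= size p by lia.
have Er := path_uniq Hr Hp Hsz.
have : y \in x :: r by rewrite -Hl mem_last.
rewrite Er !inE => /orP[->//|/mem_take ->]; by rewrite orbT.
Qed.


Definition blk v : {set V} := [set u | hd u == hd v].

Lemma blk_eq v w : (blk v == blk w) = (hd v == hd w).
Proof.
apply/eqP/eqP => [H|H].
  have : v \in blk w by rewrite -H inE.
  by rewrite inE => /eqP.
by apply/setP => u; rewrite !inE H.
Qed.

Definition gmax v := [arg max_(g > v | hd g == hd v) tau g].

Lemma gmax_prop v : hd (gmax v) = hd v /\ forall u, hd u = hd v -> tau u <= tau (gmax v).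
Proof.
rewrite /gmax; case: (@arg_maxnP _ v (fun g => hd g == hd v) tau (eqxx (hd v))) => g /eqP Hg Hmax.
by split => // u /eqP /Hmax.
Qed.

Lemma blk_path v : exists q, path R (hd v) q /\ [set y in hd v :: q] = blk v
  /\ last (hd v) q = gmax v.
Proof.
have [Hg Hmax] := gmax_prop v.
have Hhh : hd (hd v) = hd (gmax v) by rewrite hd_id Hg.
have Hle : tau (hd v) <= tau (gmax v) by apply: Hmax; rewrite hd_id.
have [q [Hq Hl Hs]] := hd_path Hhh Hle.
exists q; split => //; split => //.
apply/setP => y; rewrite in_set (path_memP _ Hq) inE hd_id.
apply/idP/idP; first by case/and3P.
move=> /eqP Hy; rewrite Hy eqxx /= Hs.
have := hd_tau y; rewrite Hy => H1; have := Hmax y Hy; lia.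
Qed.

Lemma blk_max v : exists q, maximal_tau_path tau E1 (hd v) q /\ [set y in hd v :: q] = blk v.
Proof.
have [q [Hq [Hset Hl]]] := blk_path v.
have [Hg Hmax] := gmax_prop v.
exists q; split => //; split => // y r Hr Hsub.
have Hin : forall z, z \in hd v :: q -> z \in y :: r by move=> z /Hsub.
have Hhv := Hin _ (mem_head _ _).
have Hyh : hd y = hd v by rewrite -(path_hd Hr Hhv) hd_id.
have Hall : forall z, z \in y :: r -> z \in hd v :: q.
  move=> z Hz; have := path_hd Hr Hz; rewrite Hyh => Hz'.
  have : z \in blk v by rewrite inE Hz'.
  by rewrite -Hset inE.
have Ey : y = hd v.
  apply: tinj; have := path_mem_tau Hr Hhv; have := path_mem_tau Hq (Hall _ (mem_head _ _)); lia.
subst y.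
have H1 := path_mem_tau Hr (Hin _ (mem_last (hd v) q)).
have H2 := path_mem_tau Hq (Hall _ (mem_last (hd v) r)).
rewrite Hl in H1; rewrite (path_last_tau Hr) in H2.
rewrite -Hl (path_last_tau Hq) in H1.
have Hs : size q = size r by lia.
have := path_uniq Hq Hr (eq_leq Hs); rewrite Hs take_size => ->; done.
Qed.

Lemma max_blk x p : maximal_tau_path tau E1 x p -> [set y in x :: p] = blk x.
Proof.
case=> Hp Hmx.
have [q [Hq [Hset _]]] := blk_path x.
have Hs : {subset x :: p <= hd x :: q}.
  move=> y Hy; have : y \in blk x by rewrite inE (path_hd Hp Hy).
  by rewrite -Hset inE.
by rewrite -(Hmx _ _ Hq Hs).
Qed.

Lemma pi_eq : pi_tau tau E1 = [set blk v | v : V].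
Proof.
apply/setP => S; rewrite inE; apply/asboolP/imsetP.
  by case=> x [p [Hm ->]]; exists x => //; exact: max_blk.
case=> v _ ->; have [q [Hm Hs]] := blk_max v.
by exists (hd v), q.
Qed.

Definition heads := [set v | pr v == None].

Lemma card_pi : #|pi_tau tau E1| = #|heads|.
Proof.
have -> : pi_tau tau E1 = [set blk v | v in heads].
  rewrite pi_eq; apply/setP => S; apply/imsetP/imsetP.
    case=> v _ ->; exists (hd v); first by rewrite inE hd_head.
    by apply/eqP; rewrite blk_eq hd_id.
  by case=> v _ ->; exists v.
apply: card_in_imset => a b; rewrite !inE => /eqP Ha /eqP Hb /eqP.
by rewrite blk_eq /hd (hdn_None _ Ha) (hdn_None _ Hb) => /eqP.
Qed.

Definition Tset := [set a : V * V | R a.1 a.2].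

Lemma card_T : #|Tset| + #|heads| = #|V|.
Proof.
rewrite -(cardsC heads) addnC; congr (_ + _).
have -> : ~: heads = [set a.2 | a in Tset].
  apply/setP => v; rewrite !inE; apply/idP/imsetP.
    case E0: (pr v) => [u|] // _; exists (u, v) => //; rewrite inE; exact: prS E0.
  case=> [[u w]] /=; rewrite inE /= => Huw ->.
  case E0: (pr w) => //; by move: (prN u E0); rewrite Huw.
rewrite card_in_imset // => [[a1 a2]] [b1 b2]; rewrite !inE /= => Ha Hb E2.
subst b2; by rewrite (R_funl Ha Hb).
Qed.

Lemma arc_same u v : E1 u v -> (hd u == hd v) = R u v.
Proof.
move=> Huv; apply/idP/idP => [/eqP Hh|/hd_R ->//].
have Hlt := tlt Huv.
have [p [Hp Hl Hs]] := hd_path Hh (ltnW Hlt).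
case: p Hp Hl Hs => [|a [|b p]] /=.
- move=> _ Euv; subst v; by rewrite ltnn in Hlt.
- by rewrite andbT => H <-.
- move=> Hp Hl Hs; exfalso; apply: (@hnosc u v); split => //.
  exists [:: a, b & p]; split => //.
  apply: (sub_path _ (Hp : path R u [:: a, b & p])) => x y; exact: R_E1.
Qed.

Lemma card_sub (A : {set V * V}) (P : pred (V * V)) :
  #|[set a in A | P a]| = \sum_(a in A) P a.
Proof.
rewrite -sum1_card big_mkcond /= [RHS]big_mkcond /=; apply: eq_bigr => a _.
by rewrite !inE; case: (a \in A); case: (P a).
Qed.

Lemma mem_pi P x : P \in pi_tau tau E1 -> (x \in P) = (blk x == P).
Proof.
rewrite pi_eq => /imsetP[v _ ->]; by rewrite blk_eq inE.
Qed.

Lemma per_arc a : E1 a.1 a.2 ->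
  \sum_(P1 in pi_tau tau E1) \sum_(P2 in pi_tau tau E1 | P2 != P1)
     ((a.1 \in P1) && (a.2 \in P2)) = ~~ R a.1 a.2.
Proof.
move=> Ha.
have Hb1 : blk a.1 \in pi_tau tau E1 by rewrite pi_eq; apply/imsetP; exists a.1.
have Hb2 : blk a.2 \in pi_tau tau E1 by rewrite pi_eq; apply/imsetP; exists a.2.
rewrite (bigD1 (blk a.1)) //= [X in _ + X]big1 ?addn0 => [|P1 /andP[HP1 HP]]; last first.
  apply: big1 => P2 _; by rewrite (mem_pi _ HP1) eq_sym (negbTE HP).
rewrite -arc_same // -blk_eq eq_sym.
case: (eqVneq (blk a.2) (blk a.1)) => Hb /=.
  apply: big1 => P2 /andP[HP2 HP]; rewrite (mem_pi _ HP2) (mem_pi _ Hb1) eqxx /=.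
  case E2: (blk a.2 == P2) => //=; by rewrite -(eqP E2) Hb eqxx in HP.
rewrite (bigD1 (blk a.2)) /=; last by rewrite Hb2 Hb.
rewrite big1 ?addn0.
  by rewrite (mem_pi _ Hb2) (mem_pi _ Hb1) !eqxx.
move=> P2 /andP[/andP[HP2 _] HP]; rewrite (mem_pi _ HP2) eq_sym (negbTE HP); by rewrite andbF.
Qed.

Lemma cross_eq :
  (\sum_(P1 in pi_tau tau E1) \sum_(P2 in pi_tau tau E1 | P2 != P1)
       #|arcs_between E1 P1 P2|) + #|Tset| = #|arcs E1|.
Proof.
have Hc : forall P1 P2, #|arcs_between E1 P1 P2| =
    \sum_(a in arcs E1) ((a.1 \in P1) && (a.2 \in P2)).
  move=> P1 P2; rewrite -card_sub; apply: eq_card => a; by rewrite !inE andbA.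
under eq_bigr => P1 _ do under eq_bigr => P2 _ do rewrite Hc.
under eq_bigr => P1 _ do rewrite exchange_big.
rewrite exchange_big /=.
have -> : Tset = [set a in arcs E1 | R a.1 a.2].
  apply/setP => a; rewrite !inE; apply/idP/idP => [H|/andP[]//].
  by rewrite H (R_E1 H).
rewrite card_sub -big_split /= -sum1_card; apply: eq_bigr => a.
rewrite inE => Ha; rewrite per_arc //; by case: (R a.1 a.2).
Qed.

End S.

Local Open Scope ring_scope.

Theorem lemma3p1 (V : finType) (E E1 : rel V)
  (hdag : acyclic E)
  (hsub : forall u v, E1 u v -> E u v)
  (hnosc : no_shortcuts E1)
  (tau : V -> nat) (htau : topological_sorting E tau) :
  (#|V|%:Z - #|pi_tau tau E1|%:Z =
   #|arcs E1|%:Z -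
   (\sum_(P1 in pi_tau tau E1) \sum_(P2 in pi_tau tau E1 | P2 != P1)
       #|arcs_between E1 P1 P2|)%N%:Z)%R.
Proof.
have H1 := card_pi E1 htau.
have H2 := card_T E1 htau.
have H3 := cross_eq hsub hnosc htau.
rewrite H1 -H2 -H3.
move: (\sum_(P1 in _) _)%N => c.
rewrite !PoszD; lia.
Qed.
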